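(* Let $Z$ be a topological space which is the disjoint union $Z=X\sqcup Y$ of two subsets (with subspace topologies), with $X$ open in $Z$. Define $f:\mathrm{Closed}(X)\to\mathrm{Closed}(Y)$ by $f(A)=\mathrm{Cl}_Z(A)\cap Y$ and $g:\mathrm{Closed}(Y)\to\mathrm{Closed}(X)$ by $g(B)=\mathrm{Cl}_Z(B)\cap X$. Then $(f,g)$ is an admissible pair and $Z$ and $X+_{f,g}Y$ have the same topology.
   Context: $\mathrm{Closed}(A)$ is the set of closed subsets of a space $A$. A map $f:\mathrm{Closed}(X)\to\mathrm{Closed}(Y)$ is admissible if $f(\emptyset)=\emptyset$ and $f(A_1\cup A_2)=f(A_1)\cup f(A_2)$. An admissible pair is a pair of admissible maps $f:\mathrm{Closed}(X)\to\mathrm{Closed}(Y)$, $g:\mathrm{Closed}(Y)\to\mathrm{Closed}(X)$ with $g(f(A))\subseteq A$ and $f(g(B))\subseteq B$ for all closed $A\subseteq X$, $B\subseteq Y$. Then $X+_{f,g}Y$ is the set $X\sqcup Y$ with the topology whose closed sets are the $D$ with $D\cap X$ closed in $X$, $D\cap Y$ closed in $Y$, $f(D\cap X)\subseteq D$ and $g(D\cap Y)\subseteq D$. *)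

(* Defs.v *)
From HB Require Import structures.
From mathcomp Require Import all_boot all_classical topology.
Set Implicit Arguments. Unset Strict Implicit. Unset Printing Implicit Defensive.
Local Open Scope classical_set_scope.

(* All spaces are realised as subsets of one ambient topological space T;
   the disjoint union X ⊔ Y is T itself when X, Y partition T. *)

Definition rel_closed (T : topologicalType) (X A : set T) : Prop :=
  exists C : set T, closed C /\ A = C `&` X.

Definition admissible_map (T : topologicalType) (X Y : set T)
    (f : set T -> set T) : Prop :=
  [/\ (forall A, rel_closed X A -> rel_closed Y (f A)),
      f set0 = set0 &
      (forall A1 A2, rel_closed X A1 -> rel_closed X A2 ->
         f (A1 `|` A2) = f A1 `|` f A2)].

Definition admissible_pair (T : topologicalType) (X Y : set T)
    (f g : set T -> set T) : Prop :=
  [/\ admissible_map X Y f, admissible_map Y X g,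
      (forall A, rel_closed X A -> g (f A) `<=` A) &
      (forall B, rel_closed Y B -> f (g B) `<=` B)].

Definition sum_closed (T : topologicalType) (X Y : set T)
    (f g : set T -> set T) (D : set T) : Prop :=
  [/\ rel_closed X (D `&` X), rel_closed Y (D `&` Y),
      f (D `&` X) `<=` D & g (D `&` Y) `<=` D].

(* Main.v *)
Require Import Defs.
From mathcomp Require Import all_boot all_classical topology.
Local Open Scope classical_set_scope.

Lemma cl_sub (Z : topologicalType) (A C : set Z) :
  closed C -> A `<=` C -> closure A `<=` C.
Proof. by move=> cC AC; rewrite (closure_id C).1 //; exact: closureS. Qed.
Arguments cl_sub {Z A C}.

Lemma adm_map (Z : topologicalType) (X Y : set Z) :
  admissible_map X Y (fun A => closure A `&` Y).
Proof.
split.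
- by move=> A _; exists (closure A); split => //; exact: closed_closure.
- by rewrite closure0 set0I.
- by move=> A1 A2 _ _; rewrite closureU setIUl.
Qed.

Theorem mainTheorem9 (Z : topologicalType) (X Y : set Z) :
  X `&` Y = set0 -> X `|` Y = setT -> open X ->
  let f := fun A : set Z => closure A `&` Y in
  let g := fun B : set Z => closure B `&` X in
  admissible_pair X Y f g /\
  (forall D : set Z, closed D <-> sum_closed X Y f g D).
Proof.
move=> XY0 XYT oX f g.
have YC : Y = ~` X.
  apply/seteqP; split=> z.
  - by move=> Yz Xz; have : (X `&` Y) z by []; rewrite XY0.
  - move=> nXz; have : (X `|` Y) z by rewrite XYT.
    by case.
have cY : closed Y by rewrite YC closedC.
split.
  split; [exact: adm_map | exact: adm_map | |].
  - move=> A _ z [/(cl_sub cY (@subIsetr _ _ _) _) Yz Xz].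
    by have : (X `&` Y) z by []; rewrite XY0.
  - move=> B [C [cC ->]] z [clz Yz]; split => //.
    have sub : g (C `&` Y) `<=` C.
      by move=> w [clw _]; exact: (cl_sub cC (@subIsetl _ C Y) w clw).
    exact: (cl_sub cC sub z clz).
move=> D; split.
  move=> cD; split.
  - by exists D; split.
  - by exists D; split.
  - by move=> z [/(cl_sub cD (@subIsetl _ _ _) _)].
  - by move=> z [/(cl_sub cD (@subIsetl _ _ _) _)].
case=> [[C1 [cC1 E1]] [C2 [cC2 E2]] fD gD].
apply/closure_id; apply/seteqP; split; first exact: subset_closure.
have DE : D = (D `&` X) `|` (D `&` Y) by rewrite -setIUr XYT setIT.
rewrite [in X in X `<=` _]DE closureU => z [] clz.
- have : (X `|` Y) z by rewrite XYT.
  case=> [Xz|Yz]; last by apply: fD.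
  have : (C1 `&` X) z by split => //; apply: (cl_sub cC1 _ z clz); rewrite E1.
  by rewrite -E1 => -[].
- have : (X `|` Y) z by rewrite XYT.
  case=> [Xz|Yz]; first by apply: gD.
  have : (C2 `&` Y) z by split => //; apply: (cl_sub cC2 _ z clz); rewrite E2.
  by rewrite -E2 => -[].
Qed.
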